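(* Let $\mathbf q=(q_1,\dots,q_n)\in\mathbb Z_{\ge1}^n$ satisfy $1+\sum_{i=1}^n q_i=\mathrm{lcm}(\mathbf q)-1$ (equivalently, $\mathrm{rsn}(\mathbf q)=1$ and $\ell(\mathrm{rs}(\mathbf q))=1$), and let $\mathrm{rs}(\mathbf q)=(1,q_1,\dots,q_n)\in\mathbb Z_{\ge1}^{n+1}$. Then $w(\mathbf q,b)=w(\mathrm{rs}(\mathbf q),b)$ for all integers $0\le b\le\sum_{i=1}^n q_i$, and consequently $$h^*(\Delta_{(1,\mathrm{rs}(\mathbf q))};z)=h^*(\Delta_{(1,\mathbf q)};z)+z^{n+1}.$$
   Context: For $\mathbf p=(p_1,\dots,p_N)\in\mathbb Z_{\ge1}^N$ (entries in weakly increasing order), let $\Delta_{(1,\mathbf p)}=\mathrm{conv}\{e_1,\dots,e_N,-\sum_{i=1}^N p_ie_i\}\subset\mathbb R^N$, and define for integers $b$ $$w(\mathbf p,b)=b-\sum_{i=1}^N\left\lfloor\frac{p_i b}{1+p_1+\cdots+p_N}\right\rfloor.$$ It is known that the $h^*$-polynomial of $\Delta_{(1,\mathbf p)}$ equals $\sum_{b=0}^{p_1+\cdots+p_N}z^{w(\mathbf p,b)}$, where the $h^*$-polynomial of a lattice polytope $P$ is the numerator $h^*(P;z)$ in $\sum_{t\ge0}|tP\cap\mathbb Z^N|z^t=h^*(P;z)/(1-z)^{\dim P+1}$. $\mathrm{lcm}(\mathbf q)$ is the least common multiple of the entries of $\mathbf q$. $\Delta_{(1,\mathbf p)}$ is reflexive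 iff $p_i\mid 1+\sum_jp_j$ for all $i$; $\mathrm{rsn}(\mathbf q)$ is the least $k\ge0$ such that prepending $k$ ones to $\mathbf q$ gives a reflexive simplex, $\mathrm{rs}(\mathbf q)$ is $\mathbf q$ with $\mathrm{rsn}(\mathbf q)$ ones prepended, and for reflexive $\mathbf p$, $\ell(\mathbf p)$ is defined by $1+\sum_i p_i=\ell(\mathbf p)\,\mathrm{lcm}(\mathbf p)$. *)

(* Defs.v *)
From mathcomp Require Import all_boot all_order all_algebra.
From mathcomp Require Import boolp classical_sets cardinality.
Set Implicit Arguments. Unset Strict Implicit. Unset Printing Implicit Defensive.
Import Order.TTheory GRing.Theory Num.Theory.

Definition lcm_seq (q : seq nat) : nat := \big[lcmn/1%N]_(x <- q) x.

Definition w (p : seq nat) (b : nat) : int :=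
  (b%:Z - \sum_(x <- p) ((x * b) %/ (1 + sumn p))%N%:Z)%R.

(* rs(q) when rsn(q) = 1: prepend one entry equal to 1. *)
Definition rs1 (q : seq nat) : seq nat := 1%N :: q.

(* Vertices of Delta_(1,p) in Q^N (N = size p), indexed by option 'I_N:
   Some k is e_k, None is - sum_i p_i e_i. *)
Definition vtx (p : seq nat) (j : option 'I_(size p)) (i : 'I_(size p)) : rat :=
  match j with
  | Some k => ((i == k)%:R)%R
  | None => (- (nth 0%N p i)%:R)%R
  end.

Definition in_dilate (p : seq nat) (t : nat) (x : 'I_(size p) -> int) : Prop :=
  exists lam : option 'I_(size p) -> rat,
    (forall j, 0 <= lam j)%R /\
    (\sum_j lam j = t%:R)%R /\
    (forall i, (x i)%:~R = \sum_j lam j * @vtx p j i)%R.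

Definition lattice_pts (p : seq nat) (t : nat) : set ('I_(size p) -> int) :=
  [set x | @in_dilate p t x].

(* h is the h^*-polynomial of Delta_(1,p) (which has dimension N = size p):
   sum_t |t Delta ∩ Z^N| z^t = h(z) / (1-z)^(N+1), i.e. coefficientwise
   |t Delta ∩ Z^N| = sum_j h_j [z^(t-j)] (1-z)^-(N+1)
                   = sum_{j <= t} h_j * binom(t - j + N, N). *)
Definition is_hstar (p : seq nat) (h : {poly int}) : Prop :=
  forall t : nat, exists k : nat,
    (@lattice_pts p t #= `I_k)%card /\
    (k%:Z = \sum_(j < size h) h`_j *
              (if (j <= t)%N then 'C(t - j + size p, size p) else 0%N)%:Z)%R.

(* Main.v *)
Require Import Defs.
From mathcomp Require Import all_boot all_order all_algebra.
From mathcomp Require Import boolp classical_sets cardinality.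
From mathcomp Require Import zify ring lra.
Import Order.TTheory GRing.Theory Num.Theory.
Local Open Scope ring_scope.

Definition Dn (p : seq nat) := (1 + sumn p)%N.
Definition fl (p : seq nat) (i : nat) (u : nat) := ((nth 0%N p i * u) %/ Dn p)%N.
Definition Fs (p : seq nat) (u : nat) := (\sum_(i < size p) fl p i u)%N.
Definition wn (p : seq nat) (b : nat) := (b - \sum_(x <- p) (x * b) %/ Dn p)%N.

Lemma Dn_gt0 p : (0 < Dn p)%N.
Proof. by rewrite /Dn. Qed.

Lemma Fs_seq p u : (\sum_(x <- p) (x * u) %/ Dn p)%N = Fs p u.
Proof. by rewrite (big_nth 0%N) big_mkord. Qed.

Lemma sumn_ord p : sumn p = (\sum_(i < size p) nth 0%N p i)%N.
Proof. by rewrite sumnE (big_nth 0%N) big_mkord. Qed.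

Lemma Fs_le p b : (Fs p b <= b)%N.
Proof.
have H : (Fs p b * Dn p <= sumn p * b)%N.
  rewrite /Fs big_distrl /= sumn_ord big_distrl /=.
  apply: leq_sum => i _; rewrite /fl. exact: leq_divM.
have : (Fs p b * Dn p <= b * Dn p)%N.
  apply: (leq_trans H); rewrite /Dn mulnC leq_mul2l; apply/orP; right; lia.
by rewrite leq_pmul2r ?Dn_gt0.
Qed.

Lemma Fs_split p k b : (Fs p (k * Dn p + b) = k * sumn p + Fs p b)%N.
Proof.
rewrite /Fs sumn_ord big_distrr -big_split /=; apply: eq_bigr => i _.
rewrite /fl mulnDr mulnA divnMDl ?Dn_gt0 //; ring.
Qed.

Lemma w_wn p b : w p b = (wn p b)%:Z.
Proof.
rewrite /w /wn Fs_seq.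
have -> : (\sum_(x <- p) ((x * b) %/ (1 + sumn p))%:Z = (Fs p b)%:Z)%R.
  by rewrite -Fs_seq /Dn (big_morph Posz PoszD (erefl _)).
by rewrite subzn ?Fs_le.
Qed.

Lemma key_div x b L : (0 < x)%N -> (x %| L)%N -> (b + 2 <= L)%N -> ((x*b) %/ (L-1) = (x*b) %/ L)%N.
Proof.
move=> x0 /dvdnP [d ->] hb.
rewrite [(d * x)%N]mulnC divnMl //.
have d0 : (0 < d)%N by case: d hb => //=; lia.
set m := (b %/ d)%N.
have hb2 := divn_eq b d; have hr := ltn_pmod b d0.
rewrite -/m in hb2.
set r := (b %% d)%N in hb2 hr.
apply/eqP; rewrite eqn_leq; apply/andP; split.
  rewrite -ltnS ltn_divLR; last by nia.
  have [hr1|hr1] : (r + 1 < d \/ r + 1 = d)%N by lia.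
  + nia.
  + nia.
rewrite leq_divRL; last by nia.
nia.
Qed.

Lemma lcm_dvd q x : x \in q -> (x %| lcm_seq q)%N.
Proof.
elim: q => // y q IH; rewrite inE /lcm_seq big_cons => /orP [/eqP ->|/IH h].
  exact: dvdn_lcml.
exact: dvdn_trans h (dvdn_lcmr _ _).
Qed.

Lemma wn_rs q b : all (fun x => 0 < x)%N q -> (1 + sumn q = lcm_seq q - 1)%N ->
  (b <= sumn q)%N -> wn (rs1 q) b = wn q b.
Proof.
move=> /allP hpos hL hb.
rewrite /wn /Dn big_cons /= divn_small; last by lia.
rewrite add0n; congr (_ - _)%N; apply: eq_big_seq => x xq.
have -> : (1 + (1 + sumn q) = lcm_seq q)%N by lia.
have -> : (1 + sumn q = lcm_seq q - 1)%N by lia.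
rewrite key_div //; [exact: hpos | exact: lcm_dvd | lia].
Qed.

Lemma sum_pred q : all (fun x => 0 < x)%N q ->
  (\sum_(x <- q) (x - 1) + size q = sumn q)%N.
Proof.
elim: q => [|y q IH] /=; first by rewrite big_nil.
move=> /andP [y0 /IH <-]; rewrite big_cons; lia.
Qed.

Lemma wn_top q : all (fun x => 0 < x)%N q -> (1 + sumn q = lcm_seq q - 1)%N ->
  wn (rs1 q) (sumn q + 1) = (size q).+1.
Proof.
move=> hpos hL.
have hpos' := hpos; move/allP: hpos' => hpos'.
rewrite /wn /Dn big_cons /= divn_small; last by lia.
have -> : (\sum_(x <- q) (x * (sumn q + 1)) %/ (1 + (1 + sumn q)) = \sum_(x <- q) (x - 1))%N.
  apply: eq_big_seq => x xq.
  have x0 := hpos' x xq; have hd := lcm_dvd _ _ xq.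
  have xl : (x <= lcm_seq q)%N by apply: dvdn_leq => //; lia.
  have -> : (sumn q + 1 = lcm_seq q - 1)%N by lia.
  have -> : (1 + (1 + sumn q) = lcm_seq q)%N by lia.
  apply/eqP; rewrite eqn_leq; apply/andP; split.
    rewrite -ltnS ltn_divLR; nia.
  rewrite leq_divRL; nia.
have := sum_pred q hpos; lia.
Qed.

Definition cc (N t j : nat) : int := (if (j <= t)%N then 'C(t - j + N, N) else 0%N)%:Z.

Lemma val_widen N t (h : {poly int}) M : (size h <= M)%N ->
  \sum_(j < size h) h`_j * cc N t j = \sum_(j < M) h`_j * cc N t j.
Proof.
move=> hM; rewrite (big_ord_widen M (fun j => h`_j * cc N t j)) // big_mkcond.
apply: eq_bigr => i _; case: ifP => // /negbT; rewrite -leqNgt => hi.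
by rewrite nth_default // mul0r.
Qed.

Lemma hstar_uniq N (h g : {poly int}) :
  (forall t, \sum_(j < size h) h`_j * cc N t j = \sum_(j < size g) g`_j * cc N t j) ->
  h = g.
Proof.
move=> H; set M := maxn (size h) (size g).
have H2 t : \sum_(j < M) (h`_j - g`_j) * cc N t j = 0.
  rewrite (eq_bigr (fun j : 'I_M => h`_j * cc N t j - g`_j * cc N t j)); last first.
    by move=> i _; rewrite mulrBl.
  rewrite sumrB -(val_widen _ _ _ _ (leq_maxl _ _)) -(val_widen _ _ _ _ (leq_maxr _ _)).
  by rewrite H subrr.
apply/polyP => j; elim/ltn_ind: j => j IH.
have [hj|hj] := leqP M j.
  by rewrite !nth_default // (leq_trans _ hj) // ?leq_maxl ?leq_maxr.
have := H2 j; rewrite (bigD1 (Ordinal hj)) //= big1.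
  by rewrite /cc leqnn subnn add0n binn mulr1 addr0 => /eqP; rewrite subr_eq0 => /eqP.
move=> i ni; have [lt|lt] := ltnP i j.
  by rewrite IH // subrr mul0r.
have gt : (j < i)%N.
  rewrite ltn_neqAle lt andbT; apply/negP => /eqP e; move: ni.
  have -> : i = Ordinal hj by apply/val_inj; rewrite /= e.
  by rewrite eqxx.
by rewrite /cc leqNgt gt mulr0.
Qed.

Lemma wn_le p b : (wn p b <= b)%N.
Proof. by rewrite /wn leq_subr. Qed.

Lemma wn_lt p (b : 'I_(Dn p)) : (wn p b < Dn p)%N.
Proof. exact: leq_ltn_trans (wn_le _ _) (ltn_ord b). Qed.

Definition Pp (p : seq nat) : {poly int} :=
  \poly_(j < Dn p) (\sum_(b < Dn p) ((wn p b == j) : nat))%:Z.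

Lemma val_P N t p :
  \sum_(j < size (Pp p)) (Pp p)`_j * cc N t j = \sum_(b < Dn p) cc N t (wn p b).
Proof.
rewrite (val_widen _ _ _ _ (size_poly _ _)).
rewrite (eq_bigr (fun j : 'I_(Dn p) => \sum_(b < Dn p) ((wn p b == j) : nat)%:Z * cc N t j)); last first.
  move=> j _; rewrite coef_poly ltn_ord (big_morph Posz PoszD (erefl _)).
  by rewrite mulr_suml.
rewrite exchange_big /=; apply: eq_bigr => b _.
rewrite (bigD1 (Ordinal (wn_lt p b))) //= eqxx big1 ?addr0 ?mul1r //.
move=> j nj; case: eqP => [e|_]; last by rewrite mul0r.
move: nj; have -> : j = Ordinal (wn_lt p b) by apply/val_inj; rewrite /= e.
by rewrite eqxx.
Qed.

Lemma sum_wn_big q j : (Dn q <= j)%N -> (\sum_(b < Dn q) ((wn q b == j) : nat) = 0)%N.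
Proof.
move=> hj; apply: big1 => b _.
by case: eqP => // e; have := wn_lt q b; rewrite e ltnNge hj.
Qed.

Lemma Pp_rs q : all (fun x => 0 < x)%N q -> (1 + sumn q = lcm_seq q - 1)%N ->
  Pp (rs1 q) = Pp q + 'X^((size q).+1).
Proof.
move=> hpos hL.
have hn := sum_pred q hpos.
have DD : Dn (rs1 q) = (Dn q).+1 by rewrite /Dn /=.
apply/polyP => j; rewrite coefD coefXn !coef_poly.
rewrite DD big_ord_recr /=.
have -> : wn (rs1 q) (Dn q) = (size q).+1 by rewrite /Dn addnC wn_top.
rewrite (eq_bigr (fun b : 'I_(Dn q) => ((wn q b == j) : nat))); last first.
  move=> b _; rewrite wn_rs //; have := ltn_ord b; rewrite /Dn; lia.
have [hj|hj] := ltnP j (Dn q).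
  rewrite ltnS (ltnW hj) PoszD; congr (_ + _); rewrite eq_sym.
  by case: eqP.
rewrite sum_wn_big // add0n.
have [hj2|hj2] := ltnP j (Dn q).+1.
  by rewrite eq_sym add0r; case: eqP.
rewrite add0r; have -> : (j == (size q).+1) = false.
  by apply/eqP => e; move: hj2; rewrite e /Dn; lia.
by [].
Qed.

Lemma big_opt (I : finType) (F : option I -> rat) : \sum_j F j = F None + \sum_i F (Some i).
Proof.
rewrite (bigD1 None) //=; congr (_ + _).
rewrite (reindex_omap Some id) //=.
  by apply: eq_bigl => i; rewrite eqxx.
by case.
Qed.

Lemma vtx_sum p (lam : option 'I_(size p) -> rat) i :
  \sum_j lam j * @vtx p j i = lam (Some i) - lam None * (nth 0%N p i)%:R.
Proof.
rewrite big_opt /= addrC mulrN; congr (_ - _).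
rewrite (bigD1 i) //= eqxx mulr1 big1 ?addr0 // => k nk.
by rewrite eq_sym (negbTE nk) mulr0.
Qed.

Lemma intr_sum (I : finType) (F : I -> int) : (\sum_i F i)%:~R = \sum_i (F i)%:~R :> rat.
Proof. exact: (big_morph (fun z : int => z%:~R : rat) (intrD _) (erefl _)). Qed.

Lemma sumS_rat p : (sumn p)%:R = \sum_(i < size p) (nth 0%N p i)%:R :> rat.
Proof. by rewrite sumn_ord natr_sum. Qed.

Lemma in_dilateP p t (x : 'I_(size p) -> int) :
  @in_dilate p t x <-> ((\sum_i x i <= t%:Z) /\
    forall i, 0 <= (Dn p)%:Z * x i + (nth 0%N p i)%:Z * (t%:Z - \sum_i x i)).
Proof.
split.
  move=> [lam [l0 [ls lx]]].
  rewrite big_opt in ls.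
  have hx i : (x i)%:~R = lam (Some i) - lam None * (nth 0%N p i)%:R :> rat.
    by rewrite lx vtx_sum.
  have hs : (t%:Z - \sum_i x i)%:~R = lam None * (Dn p)%:R :> rat.
    rewrite intrB intr_sum (eq_bigr _ (fun i _ => hx i)) sumrB -mulr_sumr -sumS_rat.
    change ((t%:Z)%:~R) with (t%:R : rat); rewrite -ls /Dn natrD; ring.
  split.
    rewrite -subr_ge0 -(ler0z rat) hs; apply: mulr_ge0 => //.
  move=> i; rewrite -(ler0z rat) intrD !intrM hs hx.
  change ((Posz (Dn p))%:~R) with ((Dn p)%:R : rat).
  change ((Posz (nth 0%N p i))%:~R) with ((nth 0%N p i)%:R : rat).
  have -> : (Dn p)%:R * (lam (Some i) - lam None * (nth 0%N p i)%:R) +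
      (nth 0%N p i)%:R * (lam None * (Dn p)%:R) = (Dn p)%:R * lam (Some i) :> rat by ring.
  by apply: mulr_ge0.
move=> [hs hi].
pose l0 : rat := (t%:Z - \sum_i x i)%:~R / (Dn p)%:R.
have D0 : (Dn p)%:R != 0 :> rat by rewrite pnatr_eq0 /Dn.
have l0D : l0 * (Dn p)%:R = (t%:Z - \sum_i x i)%:~R by rewrite /l0 divfK.
exists (fun j => if j is Some i then (x i)%:~R + l0 * (nth 0%N p i)%:R else l0).
split; [case => [i|] | split].
- have : 0 <= ((Dn p)%:Z * x i + (nth 0%N p i)%:Z * (t%:Z - \sum_i x i))%:~R :> rat.
    by rewrite ler0z.
  rewrite intrD !intrM -l0D.
  change ((Posz (Dn p))%:~R) with ((Dn p)%:R : rat).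
  change ((Posz (nth 0%N p i))%:~R) with ((nth 0%N p i)%:R : rat).
  have -> : (Dn p)%:R * (x i)%:~R + (nth 0%N p i)%:R * (l0 * (Dn p)%:R) =
     (Dn p)%:R * ((x i)%:~R + l0 * (nth 0%N p i)%:R) :> rat by ring.
  rewrite pmulr_rge0 //; rewrite ltr0n /Dn //.
- rewrite /l0 divr_ge0 // ler0z subr_ge0 //.
- rewrite big_opt /= big_split /= -mulr_sumr -sumS_rat -intr_sum.
  apply: (mulIf D0); rewrite !mulrDl l0D /Dn natrD.
  change ((t%:Z)%:~R) with (t%:R : rat). rewrite intrB.
  change ((t%:Z)%:~R) with (t%:R : rat).
  have : l0 * (Dn p)%:R = t%:R - (\sum_i x i)%:~R :> rat by rewrite l0D intrB.
  rewrite /Dn natrD => e.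
  have -> : l0 * (sumn p)%:R * (1 + (sumn p)%:R) = (l0 * (1 + (sumn p)%:R)) * (sumn p)%:R by ring.
  rewrite e; ring.
- move=> i; rewrite vtx_sum /=; ring.
Qed.

Lemma fe (D : nat) (x : int) (a : nat) : (0 < D)%N ->
  (0 <= D%:Z * x + a%:Z) = (0 <= x + (a %/ D)%N%:Z).
Proof.
move=> D0; have ha := divn_eq a D; have hr := ltn_pmod a D0.
apply/idP/idP => h; nia.
Qed.

Definition syt N t (y : N.-tuple 'I_t.+1) : nat := (\sum_(i <- y) (i : nat))%N.
Arguments syt {N t} y.

Definition Aset p t : {set ('I_(Dn p) * (size p).-tuple 'I_t.+1)} :=
  [set z : 'I_(Dn p) * (size p).-tuple 'I_t.+1 | (wn p z.1 <= t)%N && (syt z.2 <= t - wn p z.1)%N].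

Definition uu p t (z : 'I_(Dn p) * (size p).-tuple 'I_t.+1) : nat :=
  ((t - wn p z.1 - syt z.2) * Dn p + z.1)%N.
Arguments uu {p t} z.

Definition gg p t (z : 'I_(Dn p) * (size p).-tuple 'I_t.+1) : 'I_(size p) -> int :=
  fun i => (tnth z.2 i : nat)%:Z - (fl p i (uu z))%:Z.
Arguments gg {p t} z i.

Lemma syt_tnth N t (y : N.-tuple 'I_t.+1) : syt y = (\sum_(i < N) tnth y i)%N.
Proof. by rewrite /syt big_tuple. Qed.

Lemma sum_gg p t z : \sum_i @gg p t z i = (syt z.2)%:Z - (Fs p (uu z))%:Z.
Proof.
rewrite /gg sumrB syt_tnth /Fs.
by rewrite !(big_morph Posz PoszD (erefl _)).
Qed.

Lemma uu_A p t z : z \in Aset p t -> t%:Z - \sum_i @gg p t z i = (uu z)%:Z.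
Proof.
rewrite inE => /andP [h1 h2].
rewrite sum_gg /uu Fs_split.
have := Fs_le p z.1; rewrite /wn Fs_seq in h1 h2 * => hF.
rewrite /Dn mulnDr muln1.
move: (_ * sumn p)%N => m.
move: (syt z.2) (Fs p z.1) (nat_of_ord z.1) h1 h2 hF => s F b h1 h2 hF.
move: (Fs p b) h1 h2 hF => F' h1 h2 hF.
move: h1 h2 hF; clear => h1 h2 hF. lia.
Qed.

Lemma gg_in p t z : z \in Aset p t -> @in_dilate p t (@gg p t z).
Proof.
move=> zA; have hu := uu_A _ _ _ zA; apply/in_dilateP; rewrite hu; split; first lia.
move=> i; rewrite -PoszM fe ?Dn_gt0 //.
by rewrite /gg -/(fl p i (uu z)) subrK.
Qed.

Lemma uu_mod p t z : (@uu p t z %% Dn p)%N = z.1.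
Proof. by rewrite /uu modnMDl modn_small. Qed.

Lemma gg_inj p t : {in Aset p t &, injective (@gg p t)}.
Proof.
move=> z1 z2 h1 h2 e.
have hu : uu z1 = uu z2.
  by apply/eqP; rewrite -eqz_nat -(uu_A _ _ _ h1) -(uu_A _ _ _ h2) e.
have hb : z1.1 = z2.1 by apply: val_inj; rewrite /= -(uu_mod _ _ z1) -(uu_mod _ _ z2) hu.
have hy : z1.2 = z2.2.
  apply: eq_from_tnth => i; have := congr1 (fun f => f i) e.
  rewrite /gg hu => /addIr/eqP; rewrite eqz_nat => /eqP; exact: val_inj.
by case: z1 z2 hb hy {h1 h2 e hu} => [a b] [c d] /= -> ->.
Qed.

Lemma tnth_le_syt N t (y : N.-tuple 'I_t.+1) i : (tnth y i <= syt y)%N.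
Proof. by rewrite syt_tnth (bigD1 i) //= leq_addr. Qed.

Lemma gg_surj p t x : @in_dilate p t x -> exists2 z, z \in Aset p t & @gg p t z = x.
Proof.
move=> /in_dilateP [hs hi].
set sx := \sum_i x i in hs hi.
pose u := `|t%:Z - sx|%N.
have hu : u%:Z = t%:Z - sx by rewrite /u gez0_abs // subr_ge0.
pose yv (i : 'I_(size p)) := `|(x i + (fl p i u)%:Z)%R|%N.
have hy i : (yv i)%:Z = x i + (fl p i u)%:Z.
  rewrite /yv gez0_abs //; have := hi i.
  by rewrite -hu -PoszM fe ?Dn_gt0.
pose b := (u %% Dn p)%N; pose k := (u %/ Dn p)%N.
have hu2 : u = (k * Dn p + b)%N by apply: divn_eq.
have hF : Fs p u = (k * sumn p + Fs p b)%N by rewrite hu2 Fs_split.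
pose Y := (\sum_(i < size p) yv i)%N.
have hY : Y%:Z = sx + (Fs p u)%:Z.
  rewrite /Y (big_morph Posz PoszD (erefl _)) (eq_bigr _ (fun i _ => hy i)).
  by rewrite big_split /= /Fs (big_morph Posz PoszD (erefl _)).
have hFb := Fs_le p b.
have hwn : wn p b = (b - Fs p b)%N by rewrite /wn Fs_seq.
have key : (Y + k + wn p b = t)%N.
  rewrite hwn; move: hY hu hF hu2 hFb.
  rewrite /Dn mulnDr muln1.
  move: (k * sumn p)%N (Fs p u) (Fs p b) => m Fu Fb.
  move=> hY hu hF hu2 hFb; lia.
have yle i : (yv i < t.+1)%N.
  rewrite ltnS; apply: leq_trans (_ : Y <= t)%N; last lia.
  by rewrite /Y (bigD1 i) //= leq_addr.
pose yt := [tuple (inord (yv i) : 'I_t.+1) | i < size p].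
have hyt i : (tnth yt i : nat) = yv i by rewrite tnth_mktuple inordK.
have hsyt : syt yt = Y by rewrite syt_tnth; apply: eq_bigr => i _; rewrite hyt.
exists (Ordinal (ltn_pmod u (Dn_gt0 p)), yt).
  by rewrite inE /= hsyt -/b; apply/andP; split; lia.
have huu : uu (Ordinal (ltn_pmod u (Dn_gt0 p)), yt) = u.
  rewrite /uu /= hsyt -/b hu2; congr (_ * _ + _)%N; lia.
apply: funext => i; rewrite /gg huu /= hyt hy; apply: addrK.
Qed.

Local Open Scope classical_set_scope.

Lemma lattice_img p t : @lattice_pts p t = (@gg p t) @` [set z | z \in Aset p t].
Proof.
apply/seteqP; split => x /=.
  by move=> hx; have [z zA <-] := gg_surj _ _ _ hx; exists z.
by case=> z zA <-; exact: gg_in.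
Qed.

Lemma fin_card (T : finType) (A : {set T}) : ([set z | z \in A] #= `I_#|A|)%card.
Proof.
have e : [set z | z \in A] = (@enum_val T (mem A)) @` [set: 'I_#|A|].
  apply/seteqP; split => x /=.
    move=> xA; exists (enum_rank_in xA x) => //; exact: enum_rankK_in.
  by case=> i _ <-; exact: enum_valP.
rewrite e; apply: card_eq_trans (inj_card_eq _) (card_esym card_II).
by move=> i j _ _; exact: enum_val_inj.
Qed.
Local Close Scope classical_set_scope.

Lemma cnt N t m : (m <= t)%N ->
  #|[set y : N.-tuple 'I_t.+1 | (syt y <= m)%N]| = 'C(m + N, N).
Proof.
move=> mt.
have le : (m.+1 <= t.+1)%N by [].
pose f (y : N.-tuple 'I_m.+1) : N.-tuple 'I_t.+1 := map_tuple (widen_ord le) y.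
have finj : injective f.
  have wi : injective (widen_ord le).
    by move=> a c /(congr1 val) /= h; apply: val_inj.
  move=> y1 y2 /(congr1 val) /= /(inj_map wi) h.
  exact: val_inj.
have e : [set y : N.-tuple 'I_t.+1 | (syt y <= m)%N] =
    f @: [set y : N.-tuple 'I_m.+1 | (\sum_(i <- y) i <= m)%N].
  apply/setP => y; rewrite inE; apply/idP/imsetP.
    move=> hy; exists (map_tuple (fun i : 'I_t.+1 => inord i : 'I_m.+1) y).
      rewrite inE big_tuple.
      rewrite (eq_bigr (fun j => tnth y j : nat)); first by rewrite -syt_tnth.
      move=> j _; rewrite tnth_map inordK // ltnS.
      exact: leq_trans (tnth_le_syt _ _ y j) hy.
    apply: eq_from_tnth => j; rewrite !tnth_map; apply: val_inj => /=.
    rewrite inordK // ltnS; exact: leq_trans (tnth_le_syt _ _ y j) hy.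
  case=> y'; rewrite inE => hy' ->.
  by rewrite /syt /f /= big_map.
by rewrite e card_imset // card_partial_ord_partitions addnC.
Qed.

Lemma card_A p t : #|Aset p t| =
  (\sum_(b < Dn p) (if (wn p b <= t)%N then 'C(t - wn p b + size p, size p) else 0))%N.
Proof.
rewrite -sum1_card.
rewrite (eq_bigl (fun z : 'I_(Dn p) * (size p).-tuple 'I_t.+1 => true && ((wn p z.1 <= t)%N && (syt z.2 <= t - wn p z.1)%N))); last first.
  by move=> z; rewrite inE.
rewrite -(pair_big_dep xpredT (fun (b : 'I_(Dn p)) (y : (size p).-tuple 'I_t.+1) => (wn p b <= t)%N && (syt y <= t - wn p b)%N) (fun _ _ => 1%N)) /=.
apply: eq_bigr => b _.
case: ifP => hb.
  rewrite -(cnt (size p) t (t - wn p b)) ?leq_subr // -sum1_card.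
  by apply: eq_bigl => y; rewrite inE.
by rewrite big_pred0.
Qed.

Lemma hstar_P p : is_hstar p (Pp p).
Proof.
move=> t; exists #|Aset p t|; split.
  rewrite lattice_img; apply: card_eq_trans (fin_card _ (Aset p t)).
  apply: inj_card_eq => z1 z2 h1 h2; apply: gg_inj; [move: h1 | move: h2]; rewrite in_setE /=; exact: id.
have := val_P (size p) t p; rewrite /cc => ->.
rewrite card_A (big_morph Posz PoszD (erefl _)); apply: eq_bigr => b _.
by case: ifP.
Qed.
Lemma hstar_eq p h : is_hstar p h -> h = Pp p.
Proof.
move=> H; apply: (hstar_uniq (size p)) => t.
have [k [ck ek]] := H t; have [k' [ck' ek']] := hstar_P p t.
have kk : k = k'.
  apply/card_eq_II; exact: card_eq_trans (card_esym ck) ck'.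
by rewrite -[LHS]ek -[RHS]ek' kk.
Qed.

Theorem theorem5p5 (q : seq nat) :
  all (fun x => 0 < x)%N q ->
  sorted leq q ->
  (1 + sumn q = lcm_seq q - 1)%N ->
  (forall b : nat, (b <= sumn q)%N -> w q b = w (rs1 q) b) /\
  (forall h1 h2 : {poly int}, is_hstar q h1 -> is_hstar (rs1 q) h2 ->
     h2 = (h1 + 'X^((size q).+1))%R).
Proof.
move=> hpos _ hL; split.
  by move=> b hb; rewrite !w_wn wn_rs.
move=> h1 h2 H1 H2.
by rewrite (hstar_eq _ _ H1) (hstar_eq _ _ H2) Pp_rs.
Qed.
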